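(* Let $r\ge2$ and $k\ge3$ be integers and let $\widehat{F}_k$ be any $r$-coloring of $K_k$. Let $G$ be an $(r,\widehat{F}_k)$-extremal graph which is not a complete multipartite graph. For any vertices $u,v,w$ of $G$ such that $uv\notin E(G)$, $uw\notin E(G)$ and $vw\in E(G)$, the graph obtained from $G$ by deleting the edge $vw$ is still $(r,\widehat{F}_k)$-extremal.
   Context: An $r$-coloring of a graph assigns colors from $\{1,\dots,r\}$ to edges (not necessarily properly). A copy of $\widehat{F}_k$ in a colored graph is a set of $k$ pairwise adjacent vertices admitting a bijection to $V(K_k)$ under which two edges have equal colors iff their images have equal colors in $\widehat{F}_k$; a coloring is $\widehat{F}_k$-free if it has no copy. $c_{r,\widehat{F}_k}(G)$ is the number of $\widehat{F}_k$-free $r$-colorings of $E(G)$, $c_{r,\widehat{F}_k}(n)$ its maximum over $n$-vertex graphs, and an $n$-vertex graph $G$ is $(r,\widehat{F}_k)$-extremal if $c_{r,\widehat{F}_k}(G)=c_{r,\widehat{F}_k}(n)$. *)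

(* Defs.v *)
From mathcomp Require Import all_boot.
Set Implicit Arguments. Unset Strict Implicit. Unset Printing Implicit Defensive.

Definition simple_graph n (E : {set {set 'I_n}}) : bool :=
  [forall e in E, #|e| == 2].

Definition edge_t n (E : {set {set 'I_n}}) := {e : {set 'I_n} | e \in E}.

Definition coloring n (E : {set {set 'I_n}}) r := {ffun edge_t E -> 'I_r}.

Definition colof n (E : {set {set 'I_n}}) r (c : coloring E r) (e : {set 'I_n})
  : option 'I_r :=
  match @insub _ (fun x => x \in E) (edge_t E) e with
  | Some s => Some (c s)
  | None => None
  end.

(* The pattern \hat F_k: an r-coloring of K_k, i.e. a color F [set i; j] for
   each pair i <> j in 'I_k (values on other subsets are irrelevant). *)
Definition pattern k r := {ffun {set 'I_k} -> 'I_r}.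

Definition is_copy n k r (E : {set {set 'I_n}}) (c : coloring E r)
  (F : pattern k r) (phi : {ffun 'I_k -> 'I_n}) : bool :=
  [&& injectiveb phi,
      [forall i : 'I_k, forall j : 'I_k, (i != j) ==> ([set phi i; phi j] \in E)] &
      [forall i : 'I_k, forall j : 'I_k, forall i' : 'I_k, forall j' : 'I_k,
         ((i != j) && (i' != j')) ==>
         ((colof c [set phi i; phi j] == colof c [set phi i'; phi j'])
          == (F [set i; j] == F [set i'; j']))]].

Definition F_free n k r (E : {set {set 'I_n}}) (c : coloring E r)
  (F : pattern k r) : bool :=
  ~~ [exists phi : {ffun 'I_k -> 'I_n}, is_copy c F phi].

Definition cnt_free n k r (F : pattern k r) (E : {set {set 'I_n}}) : nat :=
  #|[set c : coloring E r | F_free c F]|.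

Definition extremal n k r (F : pattern k r) (E : {set {set 'I_n}}) : Prop :=
  simple_graph E /\
  forall E' : {set {set 'I_n}}, simple_graph E' -> cnt_free F E' <= cnt_free F E.

Definition complete_multipartite n (E : {set {set 'I_n}}) : Prop :=
  exists p : 'I_n -> nat,
    forall x y : 'I_n, x != y -> ([set x; y] \in E) = (p x != p y).

(* Main.v *)
Require Import Defs.
From mathcomp Require Import all_boot zify.
Set Implicit Arguments. Unset Strict Implicit. Unset Printing Implicit Defensive.

Section S.
Variables (n k r : nat) (F : pattern k r).

Local Notation col := {ffun {set 'I_n} -> option 'I_r}.
Implicit Types (X Y Z e B H : {set 'I_n}) (E R : {set {set 'I_n}}) (psi : col).

Definition copyg (g : col) (phi : {ffun 'I_k -> 'I_n}) : bool :=
  [&& injectiveb phi,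
      [forall i : 'I_k, forall j : 'I_k, (i != j) ==> (g [set phi i; phi j] != None)] &
      [forall i : 'I_k, forall j : 'I_k, forall i' : 'I_k, forall j' : 'I_k,
         ((i != j) && (i' != j')) ==>
         ((g [set phi i; phi j] == g [set phi i'; phi j'])
          == (F [set i; j] == F [set i'; j']))]].

Definition freeg (g : col) : bool := ~~ [exists phi, copyg g phi].
Definition okg (E : {set {set 'I_n}}) (g : col) : bool :=
  [forall e, (g e != None) == (e \in E)].
Definition sub (X : {set 'I_n}) : {set {set 'I_n}} := [set e : {set 'I_n} | e \subset X].
Definition restr (R : {set {set 'I_n}}) (g : col) : col :=
  [ffun e => if e \in R then g e else None].
Definition ext (E : {set {set 'I_n}}) X Y (psi : col) :=
  #|[set g : col | [&& okg (E :&: sub X) g, freeg g & restr (sub Y) g == psi]]|.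
Definition cntX (E : {set {set 'I_n}}) X := #|[set g : col | okg (E :&: sub X) g && freeg g]|.

Definition cf (E : {set {set 'I_n}}) (c : coloring E r) : col := [ffun e => colof c e].

Lemma colof_None (E : {set {set 'I_n}}) (c : coloring E r) e : (colof c e != None) = (e \in E).
Proof. by rewrite /colof; case: insubP => [s -> _|/negbTE ->]. Qed.

Lemma colof_val (E : {set {set 'I_n}}) (c : coloring E r) (s : edge_t E) : colof c (val s) = Some (c s).
Proof. by rewrite /colof valK. Qed.

Lemma is_copyE (E : {set {set 'I_n}}) (c : coloring E r) phi : is_copy c F phi = copyg (cf c) phi.
Proof.
rewrite /is_copy /copyg; congr [&& _, _ & _].
  by apply: eq_forallb => i; apply: eq_forallb => j; rewrite ffunE colof_None.
by apply: eq_forallb => i; apply: eq_forallb => j; apply: eq_forallb => i';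
  apply: eq_forallb => j'; rewrite !ffunE.
Qed.

Lemma conv (hr : 0 < r) (E : {set {set 'I_n}}) : cnt_free F E = cntX E setT.
Proof.
have sE : E :&: sub setT = E.
  by apply/setP => e; rewrite !inE subsetT andbT.
rewrite /cntX sE /cnt_free.
have inj : injective (@cf E).
  move=> c1 c2 h; apply/ffunP => s.
  have := congr1 (fun g : col => g (val s)) h; rewrite !ffunE !colof_val.
  by case.
rewrite -(card_imset _ inj). apply: eq_card => g; rewrite !inE.
apply/imsetP/idP.
  case=> c; rewrite inE => fc ->; rewrite /freeg.
  apply/andP; split.
    by apply/forallP => e; rewrite ffunE colof_None.
  by move: fc; rewrite /F_free; congr (~~ _); apply: eq_existsb => phi; rewrite is_copyE.
case/andP => okE fg.
pose c : coloring E r := [ffun s => odflt (Ordinal hr) (g (val s))].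
have gc : g = cf c.
  apply/ffunP => e; rewrite ffunE /colof; case: insubP => [s sE' es|].
    rewrite ffunE -es; have := forallP okE (val s); rewrite (valP s).
    by case: (g (val s)).
  move=> eE; have := forallP okE e; rewrite (negbTE eE).
  by case: (g e).
exists c => //; rewrite inE /F_free; move: fg; rewrite /freeg gc.
by congr (~~ _); apply: eq_existsb => phi; rewrite is_copyE.
Qed.

Lemma card_part (A B : finType) (S : {set A}) (f : A -> B) :
  #|S| = \sum_(b : B) #|[set x in S | f x == b]|.
Proof.
rewrite -sum1_card (partition_big f xpredT) //=.
by apply: eq_bigr => b _; rewrite -sum1_card; apply: eq_bigl => x; rewrite inE.
Qed.

Lemma restr_restr Y Z (g : col) : Y \subset Z ->
  restr (sub Y) (restr (sub Z) g) = restr (sub Y) g.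
Proof.
move=> YZ; apply/ffunP => e; rewrite !ffunE !inE.
by case: ifP => // eY; rewrite (subset_trans eY YZ).
Qed.

Lemma cntX_fib E X Y : cntX E X = \sum_psi ext E X Y psi.
Proof.
rewrite /cntX (card_part _ (restr (sub Y))); apply: eq_bigr => psi _.
by rewrite /ext; apply: eq_card => g; rewrite !inE andbA.
Qed.

Lemma ext_trans E X Y Z psi : Y \subset Z ->
  ext E X Y psi = \sum_phi (restr (sub Y) phi == psi) * ext E X Z phi.
Proof.
move=> YZ; rewrite /ext (card_part _ (restr (sub Z))); apply: eq_bigr => phi _.
have rY g : restr (sub Z) g = phi -> restr (sub Y) g = restr (sub Y) phi.
  by move=> <-; rewrite restr_restr.
case: eqP => [h|ne]; rewrite ?mul1n ?mul0n.
  apply: eq_card => g; rewrite !inE; have [hz|hz] := eqVneq (restr (sub Z) g) phi.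
    by rewrite (rY _ hz) h eqxx !andbT.
  by rewrite !andbF.
apply: eq_card0 => g; rewrite !inE; have [hz|hz] := eqVneq (restr (sub Z) g) phi.
  by rewrite (rY _ hz); case: eqP => // h; rewrite !andbF.
by rewrite !andbF.
Qed.

Lemma copyg_eq (g1 g2 : col) (phi : {ffun 'I_k -> 'I_n}) :
  (forall i j, i != j -> g1 [set phi i; phi j] = g2 [set phi i; phi j]) ->
  copyg g1 phi = copyg g2 phi.
Proof.
move=> h; rewrite /copyg; congr [&& _, _ & _].
  by apply: eq_forallb => i; apply: eq_forallb => j; case: eqP => // /eqP ij; rewrite h.
apply: eq_forallb => i; apply: eq_forallb => j; apply: eq_forallb => i';
apply: eq_forallb => j'; case: (i =P j) => //= /eqP ij; case: (i' =P j') => //= /eqP ij'.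
by rewrite !h.
Qed.

Lemma copyg_restr R (g : col) (phi : {ffun 'I_k -> 'I_n}) : copyg (restr R g) phi -> copyg g phi.
Proof.
move=> c; rewrite -(@copyg_eq (restr R g)) // => i j ij.
case/and3P: c => _ /forallP /(_ i) /forallP /(_ j); rewrite ij /= ffunE.
by case: ifP.
Qed.

Lemma freeg_restr R (g : col) : freeg g -> freeg (restr R g).
Proof.
rewrite /freeg; apply: contra => /existsP [phi c]; apply/existsP; exists phi.
exact: copyg_restr c.
Qed.

Hypothesis k2 : 2 <= k.

Lemma freeg_split (X1 X2 : {set 'I_n}) (g : col) :
  (forall e, g e != None -> (e \subset X1) || (e \subset X2)) ->
  freeg g = freeg (restr (sub X1) g) && freeg (restr (sub X2) g).
Proof.
move=> hg; apply/idP/andP => [fg|[f1 f2]]; first by split; apply: freeg_restr.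
apply/negP => /existsP [phi c].
have pair i j : i != j -> ([set phi i; phi j] \subset X1) || ([set phi i; phi j] \subset X2).
  move=> ij; apply: hg; case/and3P: c => _ /forallP /(_ i) /forallP /(_ j).
  by rewrite ij.
have [i0 [i1 i01]] : exists i0 i1 : 'I_k, i0 != i1.
  by exists (Ordinal (ltnW k2)), (Ordinal k2).
have oth (i : 'I_k) : exists j, i != j.
  case: (i =P i0) => [->|/eqP]; first by exists i1.
  by exists i0.
have [all1|] := boolP [forall i, phi i \in X1].
  move/negP: f1; apply; apply/existsP; exists phi.
  rewrite -(@copyg_eq g) // => i j ij; rewrite ffunE inE.
  by rewrite subUset !sub1set (forallP all1 i) (forallP all1 j).
rewrite negb_forall => /existsP [i ni].
have [all2|] := boolP [forall i, phi i \in X2].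
  move/negP: f2; apply; apply/existsP; exists phi.
  rewrite -(@copyg_eq g) // => i' j ij; rewrite ffunE inE.
  by rewrite subUset !sub1set (forallP all2 i') (forallP all2 j).
rewrite negb_forall => /existsP [j nj].
case: (i =P j) => [eij|/eqP ij].
  subst j; have [j ij] := oth i; move: (pair _ _ ij).
  by rewrite !subUset !sub1set (negbTE ni) (negbTE nj).
move: (pair _ _ ij).
by rewrite !subUset !sub1set (negbTE ni) (negbTE nj) !andbF.
Qed.


Lemma okgP E (g : col) : reflect (forall e, (g e != None) = (e \in E)) (okg E g).
Proof.
apply: (iffP forallP) => h e; first exact: (eqP (h e)).
by rewrite h.
Qed.

Lemma ok_restr E X Z (g : col) : okg (E :&: sub Z) g -> X \subset Z ->
  okg (E :&: sub X) (restr (sub X) g).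
Proof.
move=> /okgP h XZ; apply/okgP => e; rewrite ffunE !inE.
case: ifP => eX; last by rewrite andbF.
by rewrite h !inE (subset_trans eX XZ).
Qed.

Lemma ext_glue E (X1 X2 : {set 'I_n}) psi :
  E :&: sub (X1 :|: X2) \subset sub X1 :|: sub X2 ->
  ext E (X1 :|: X2) (X1 :&: X2) psi =
  ext E X1 (X1 :&: X2) psi * ext E X2 (X1 :&: X2) psi.
Proof.
move=> cross; set Y := X1 :&: X2; rewrite /ext -cardsX.
set S := [set g : col | _].
have X1U : X1 \subset X1 :|: X2 by apply: subsetUl.
have X2U : X2 \subset X1 :|: X2 by apply: subsetUr.
have YX1 : Y \subset X1 by apply: subsetIl.
have YX2 : Y \subset X2 by apply: subsetIr.
have hN g : g \in S -> forall e, g e != None -> (e \subset X1) || (e \subset X2).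
  rewrite inE => /and3P [/okgP ok _ _] e ge.
  by rewrite ok in ge; have := subsetP cross e ge; rewrite !inE.
pose m (g : col) := (restr (sub X1) g, restr (sub X2) g).
have inj : {in S &, injective m}.
  move=> g g' gS g'S [e1 e2]; apply/ffunP => e.
  case e1X: (e \subset X1).
    by have := congr1 (fun h : col => h e) e1; rewrite !ffunE inE e1X.
  case e2X: (e \subset X2).
    by have := congr1 (fun h : col => h e) e2; rewrite !ffunE inE e2X.
  have gN (h : col) : h \in S -> h e = None.
    move=> hS; case: (h e =P None) => // /eqP ne.
    by have := hN h hS e ne; rewrite e1X e2X.
  by rewrite !gN.
rewrite -(card_in_imset inj); apply: eq_card => [[g1 g2]]; rewrite !inE /=.
apply/imsetP/andP => [[g gS [-> ->]]|[g1S g2S]].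
  move: (gS); rewrite inE => /and3P [ok fg /eqP rg].
  rewrite (freeg_split (hN _ gS)) in fg; case/andP: fg => f1 f2.
  by rewrite (ok_restr ok X1U) (ok_restr ok X2U) f1 f2 !restr_restr // rg eqxx.
move: g1S g2S => /and3P [/okgP ok1 f1 /eqP r1] /and3P [/okgP ok2 f2 /eqP r2].
pose g : col := [ffun e => if e \in sub X1 then g1 e else g2 e].
have g1N e : e \notin sub X1 -> g1 e = None.
  by move=> ne; apply/eqP; apply: contraNT ne; rewrite ok1 inE => /andP [].
have g2N e : e \notin sub X2 -> g2 e = None.
  by move=> ne; apply/eqP; apply: contraNT ne; rewrite ok2 inE => /andP [].
have rg1 : restr (sub X1) g = g1.
  apply/ffunP => e; rewrite !ffunE; case: ifP => eX1; first by rewrite eX1.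
  by rewrite g1N ?eX1.
have rg2 : restr (sub X2) g = g2.
  apply/ffunP => e; rewrite !ffunE; case: ifP => eX2; last by rewrite g2N ?eX2.
  case: ifP => // eX1.
  have eY : e \in sub Y by move: eX1 eX2; rewrite !inE subsetI => -> ->.
  have := congr1 (fun h : col => h e) r1; have := congr1 (fun h : col => h e) r2.
  by rewrite !ffunE eY => -> ->.
exists g; last by rewrite /m rg1 rg2.
have okg' : okg (E :&: sub (X1 :|: X2)) g.
  apply/okgP => e; rewrite ffunE; case: ifP => eX1.
    rewrite ok1 !inE; move: eX1; rewrite inE => eX1.
    by rewrite eX1 (subset_trans eX1 X1U).
  rewrite ok2 !inE; apply/andP/andP => [[eE eX2]|[eE eXU]].
    by rewrite eE (subset_trans eX2 X2U).
  split => //; have := subsetP cross e; rewrite !inE eE eXU => /(_ isT).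
  by move: eX1; rewrite inE => ->.
have hNg : forall e, g e != None -> (e \subset X1) || (e \subset X2).
  move=> e; rewrite (okgP _ _ okg') => /(subsetP cross); by rewrite !inE.
rewrite inE okg' (freeg_split hNg) rg1 rg2 f1 f2 /=.
by rewrite -(restr_restr _ YX1) rg1 r1 eqxx.
Qed.


Section Rel.
Variables (f : 'I_n -> 'I_n) (invf : involutive f).

Definition rels E : {set {set 'I_n}} := [set [set f x | x in e] | e : {set 'I_n} in E].
Definition relg (g : col) : col := [ffun e : {set 'I_n} => g [set f x | x in e]].

Lemma imK (e : {set 'I_n}) : [set f x | x in [set f x | x in e]] = e.
Proof. by rewrite -imset_comp (eq_imset _ invf) imset_id. Qed.

Lemma relgK : involutive relg.
Proof. by move=> g; apply/ffunP => e; rewrite !ffunE imK. Qed.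

Lemma mem_rels E e : (e \in rels E) = ([set f x | x in e] \in E).
Proof.
apply/imsetP/idP => [[x xE ->]|h]; first by rewrite imK.
by exists [set f x | x in e]; rewrite ?imK.
Qed.

Lemma mem_subrel X e : (e \in sub [set f x | x in X]) = ([set f x | x in e] \in sub X).
Proof.
rewrite !inE; apply/idP/idP => h.
  by rewrite -(imK X); apply: imsetS.
by rewrite -(imK e); apply: imsetS.
Qed.

Lemma okg_rel E' E0 (g : col) : (forall e, (e \in E') = ([set f x | x in e] \in E0)) ->
  okg E' (relg g) = okg E0 g.
Proof.
move=> hE; apply/okgP/okgP => h e.
  by have := h [set f x | x in e]; rewrite ffunE hE !imK.
by rewrite ffunE h hE.
Qed.

Lemma restr_rel Y (g : col) :
  restr (sub [set f x | x in Y]) (relg g) = relg (restr (sub Y) g).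
Proof. by apply/ffunP => e; rewrite !ffunE mem_subrel. Qed.

Lemma copyg_rel (g : col) (phi : {ffun 'I_k -> 'I_n}) :
  copyg (relg g) phi = copyg g [ffun i => f (phi i)].
Proof.
have finj : injective f := inv_inj invf.
rewrite /copyg; congr [&& _, _ & _].
- apply/injectiveP/injectiveP => h i j.
    by rewrite !ffunE => /finj; apply: h.
  by move=> e; apply: h; rewrite !ffunE e.
- by apply: eq_forallb => i; apply: eq_forallb => j; rewrite !ffunE imsetU1 imset_set1.
- by apply: eq_forallb => i; apply: eq_forallb => j; apply: eq_forallb => i';
    apply: eq_forallb => j'; rewrite !ffunE !imsetU1 !imset_set1.
Qed.

Lemma freeg_rel (g : col) : freeg (relg g) = freeg g.
Proof.
rewrite /freeg; congr (~~ _); apply/existsP/existsP => [[phi c]|[phi c]].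
  by exists [ffun i => f (phi i)]; rewrite -copyg_rel.
exists [ffun i => f (phi i)]; rewrite copyg_rel.
suff -> : [ffun i => f ([ffun i0 => f (phi i0)] i)] = phi by [].
by apply/ffunP => i; rewrite !ffunE invf.
Qed.

Lemma ext_rel E X Y psi :
  ext (rels E) [set f x | x in X] [set f x | x in Y] (relg psi) = ext E X Y psi.
Proof.
rewrite /ext -(card_imset _ (can_inj relgK)); apply: eq_card => h.
have key (g : col) : (relg g \in [set g0 : col | [&& okg (rels E :&: sub [set f x | x in X]) g0,
       freeg g0 & restr (sub [set f x | x in Y]) g0 == relg psi]]) =
   (g \in [set g : col | [&& okg (E :&: sub X) g, freeg g & restr (sub Y) g == psi]]).
  rewrite !inE freeg_rel restr_rel (inj_eq (can_inj relgK)).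
  rewrite (@okg_rel _ (E :&: sub X)) // => e.
  by rewrite in_setI mem_rels mem_subrel in_setI.
apply/imsetP/idP => [[g gS ->]|hS]; first by rewrite -key relgK.
by exists (relg h); rewrite ?relgK // key.
Qed.

End Rel.


Lemma ext_eqE E E' X Y psi : E :&: sub X = E' :&: sub X -> ext E X Y psi = ext E' X Y psi.
Proof. by rewrite /ext => ->. Qed.

Lemma ext_supp E X Y psi : restr (sub Y) psi != psi -> ext E X Y psi = 0.
Proof.
move=> h; apply: eq_card0 => g; rewrite !inE; apply/negP => /and3P [_ _ /eqP rg].
by move/eqP: h; apply; rewrite -rg restr_restr.
Qed.

Definition tr (x y : 'I_n) (z : 'I_n) : 'I_n :=
  if z == x then y else if z == y then x else z.

Lemma tr_inv x y : involutive (tr x y).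
Proof.
move=> z; rewrite /tr.
case: (z =P x) => [->|zx]; first by rewrite eqxx; case: (y =P x) => [->|] //; rewrite eqxx.
case: (z =P y) => [->|zy]; first by rewrite eqxx.
by rewrite (introF eqP zx) (introF eqP zy).
Qed.

Lemma tr_x x y : tr x y x = y. Proof. by rewrite /tr eqxx. Qed.
Lemma tr_y x y : tr x y y = x. Proof. by rewrite /tr; case: eqP => [->|]; rewrite ?eqxx. Qed.
Lemma tr_z x y z : z != x -> z != y -> tr x y z = z.
Proof. by rewrite /tr => /negbTE -> /negbTE ->. Qed.

Lemma mem_tr x y e a : (a \in [set tr x y z | z in e]) = (tr x y a \in e).
Proof. by rewrite -{1}(tr_inv x y a) mem_imset //; apply: inv_inj; apply: tr_inv. Qed.

Lemma tr_fix x y e : x \notin e -> y \notin e -> [set tr x y z | z in e] = e.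
Proof.
move=> xe ye; rewrite -[RHS]imset_id; apply: eq_in_imset => z ze.
have zx : z != x by apply/eqP => h; move: xe; rewrite -h ze.
have zy : z != y by apply/eqP => h; move: ye; rewrite -h ze.
by rewrite tr_z.
Qed.

Definition clone E x y : {set {set 'I_n}} :=
  [set e in E | y \notin e] :|: rels (tr x y) [set e in E | (x \in e) && (y \notin e)].

Lemma mem_clone E x y e : (e \in clone E x y) =
  ((e \in E) && (y \notin e)) ||
  [&& [set tr x y z | z in e] \in E, y \in e & x \notin e].
Proof.
rewrite /clone in_setU !inE mem_rels ?inE; last exact: tr_inv.
by rewrite !mem_tr tr_x tr_y.
Qed.

Lemma clone_sub E x y Z : y \notin Z -> clone E x y :&: sub Z = E :&: sub Z.
Proof.
move=> yZ; apply/setP => e; rewrite !in_setI mem_clone.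
case eZ: (e \in sub Z); rewrite ?andbF ?andbT //.
have ye : y \notin e by apply: contra yZ; move: eZ; rewrite inE => /subsetP; apply.
by rewrite (negbTE ye) andbT /= andbF orbF.
Qed.

Lemma clone_twin E x y B psi : x != y -> x \notin B -> y \notin B ->
  ext (clone E x y) (y |: B) B psi = ext E (x |: B) B psi.
Proof.
move=> xy xB yB.
case: (restr (sub B) psi =P psi) => [hpsi|/eqP hpsi]; last by rewrite !ext_supp.
have invT := tr_inv x y.
have TB : [set tr x y z | z in B] = B by apply: tr_fix.
have TX : [set tr x y z | z in x |: B] = y |: B by rewrite imsetU1 TB tr_x.
have rpsi : relg (tr x y) psi = psi.
  have psiN e : ~~ (e \subset B) -> psi e = None.
    by move=> h; rewrite -hpsi ffunE inE (negbTE h).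
  apply/ffunP => e; rewrite ffunE.
  case eB: (e \subset B).
    rewrite tr_fix //.
      by apply: contra xB; move/subsetP: eB; apply.
    by apply: contra yB; move/subsetP: eB; apply.
  rewrite !psiN ?eB //; apply/negP => h.
  by move: eB; rewrite -(imK invT e) -TB (imsetS _ h).
have -> : ext (clone E x y) (y |: B) B psi = ext (clone E x y)
   [set tr x y z | z in x |: B] [set tr x y z | z in B] (relg (tr x y) psi).
  by rewrite TX TB rpsi.
rewrite (@ext_eqE _ (rels (tr x y) (E :&: sub (x |: B)))); last first.
  apply/setP => e; rewrite !in_setI TX mem_clone mem_rels // in_setI.
  case eY: (e \in sub (y |: B)); rewrite ?andbF ?andbT //.
  have xe : x \notin e.
    apply/negP => xe; move: eY; rewrite inE => /subsetP /(_ _ xe).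
    by rewrite !inE (negbTE xy) (negbTE xB).
  have -> : [set tr x y z | z in e] \in sub (x |: B).
    by rewrite -mem_subrel // TX.
  rewrite xe andbT andbT.
  case ye: (y \in e) => /=; first by rewrite andbF andbT.
  by rewrite tr_fix ?ye // andbT andbF orbF.
rewrite ext_rel //; apply: ext_eqE.
by rewrite -setIA setIid.
Qed.

Lemma clone_simple E x y : simple_graph E -> simple_graph (clone E x y).
Proof.
move=> /forallP sE; apply/forallP => e; apply/implyP; rewrite mem_clone.
case/orP => [/andP [eE _]|/and3P [eE _ _]]; first by have := sE e; rewrite eE.
have := sE [set tr x y z | z in e]; rewrite eE /= card_imset //.
by apply: inv_inj; apply: tr_inv.
Qed.

Lemma clone_xy E x y : [set x; y] \notin clone E x y.
Proof. by rewrite mem_clone !inE !eqxx !orbT /= !andbF. Qed.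

Lemma clone_ab E x y a b : a != y -> b != y -> [set a; b] \in clone E x y -> [set a; b] \in E.
Proof.
move=> ay by'; rewrite mem_clone !inE eq_sym (negbTE ay) eq_sym (negbTE by') /=.
by rewrite andbT andbF orbF.
Qed.


Lemma t2 (a b : nat) : 2 * (a * b) <= a * a + b * b.
Proof. case: (leqP a b) => h.
  have [d ->] : exists d, b = a + d by exists (b - a); lia.
  nia.
have [d ->] : exists d, a = b + d by exists (a - b); lia.
nia. Qed.

Lemma t3 (A V W N : nat) : N = A * V -> N = A * W -> 2 * (A * N) <= A * (V * W) + A * (A * A).
Proof. move=> h1 h2.
case: (posnP A) => [->|Ap]; first by rewrite !mul0n.
have VW : V = W by apply/eqP; rewrite -(eqn_pmul2l Ap) -h1 -h2.
subst; have := t2 A W. nia. Qed.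

Lemma fin_ar a b c : 2 * a <= b + c -> c <= a -> a <= b.
Proof. lia. Qed.

Lemma sum_eq_pw (I : finType) (f g : I -> nat) : (forall i, g i <= f i) ->
  \sum_i f i <= \sum_i g i -> forall i, f i = g i.
Proof.
move=> le hs.
have e : \sum_i f i = \sum_i g i + \sum_i (f i - g i).
  by rewrite -big_split; apply: eq_bigr => i _; rewrite /= subnKC ?le.
have : \sum_i (f i - g i) == 0 by move: hs; rewrite e; lia.
rewrite sum_nat_eq0 => /forallP h i; have := h i; have := le i; lia.
Qed.

Lemma cross_ok E (X1 X2 : {set 'I_n}) : simple_graph E ->
  (forall a b, a \notin X1 -> b \notin X2 -> a \in X2 -> b \in X1 -> [set a; b] \notin E) ->
  E :&: sub (X1 :|: X2) \subset sub X1 :|: sub X2.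
Proof.
move=> /forallP sE hab; apply/subsetP => e; rewrite in_setI => /andP [eE eU].
rewrite in_setU !inE; apply/negPn/negP; rewrite negb_or => /andP [/subsetPn [a ae aX1] /subsetPn [b be bX2]].
move: eU; rewrite inE => /subsetP eU.
have aX2 : a \in X2 by move: (eU a ae); rewrite inE (negbTE aX1).
have bX1 : b \in X1 by move: (eU b be); rewrite inE (negbTE bX2) orbF.
have ab : a != b by apply/eqP => h; move: bX2; rewrite -h aX2.
have ee : e = [set a; b].
  apply/eqP; rewrite eq_sym eqEcard subUset !sub1set ae be cards2 ab /=.
  by have := sE e; rewrite eE => /eqP ->.
by move: (hab a b aX1 bX2 aX2 bX1); rewrite -ee eE.
Qed.

Lemma pair_lemma (hr : 0 < r) E x y : extremal F E -> x != y -> [set x; y] \notin E ->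
  forall psi, ext E (x |: ~: [set x; y]) (~: [set x; y]) psi =
              ext E (y |: ~: [set x; y]) (~: [set x; y]) psi.
Proof.
move=> [sE extr] xy nxy; set B := ~: [set x; y].
have xB : x \notin B by rewrite !inE eqxx.
have yB : y \notin B by rewrite !inE eqxx orbT.
have U : (x |: B) :|: (y |: B) = setT.
  by apply/setP => a; rewrite !inE; case: (a == x); case: (a == y).
have I : (x |: B) :&: (y |: B) = B.
  apply/setP => a; rewrite !inE; case ax: (a == x); case ay: (a == y) => //=.
  by move: xy; rewrite -(eqP ax) ay.
have decomp E' : simple_graph E' -> [set x; y] \notin E' ->
    cnt_free F E' = \sum_psi ext E' (x |: B) B psi * ext E' (y |: B) B psi.
  move=> sE' nE'; rewrite conv // (cntX_fib _ _ B); apply: eq_bigr => psi _.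
  have cr : E' :&: sub ((x |: B) :|: (y |: B)) \subset sub (x |: B) :|: sub (y |: B).
    apply: cross_ok => // a b; rewrite !inE.
    case ax: (a == x); case ay: (a == y); case bx: (b == x); case by': (b == y) => //=.
    all: try by move: xy; rewrite -(eqP ax) ay.
    all: try by move: xy; rewrite -(eqP bx) by'.
    by rewrite (eqP ay) (eqP bx) setUC.
  by have := ext_glue psi cr; rewrite U I.
set a := fun psi => ext E (x |: B) B psi.
set b := fun psi => ext E (y |: B) B psi.
have cE : cnt_free F E = \sum_psi a psi * b psi by apply: decomp.
have c1 : cnt_free F (clone E x y) = \sum_psi a psi * a psi.
  rewrite decomp; [|exact: clone_simple|exact: clone_xy].
  apply: eq_bigr => psi _; rewrite clone_twin //.
  by rewrite /a (@ext_eqE _ E) // clone_sub // !inE eqxx eq_sym (negbTE xy).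
have c2 : cnt_free F (clone E y x) = \sum_psi b psi * b psi.
  have exy : [set x; y] = [set y; x] by rewrite setUC.
  rewrite decomp; [|exact: clone_simple|by rewrite exy clone_xy].
  apply: eq_bigr => psi _; rewrite mulnC.
  have e1 : ext (clone E y x) (x |: B) B psi = b psi.
    rewrite /b /B exy clone_twin //; first by rewrite eq_sym.
      by rewrite !inE eqxx.
    by rewrite !inE eqxx orbT.
  have e2 : ext (clone E y x) (y |: B) B psi = b psi.
    by rewrite /b; apply: ext_eqE; rewrite clone_sub // !inE eqxx (negbTE xy).
  by rewrite e1 e2.
have h1 := extr _ (clone_simple x y sE); have h2 := extr _ (clone_simple y x sE).
have := sum_eq_pw (f := fun psi => a psi * a psi + b psi * b psi)
                  (g := fun psi => 2 * (a psi * b psi)).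
move=> /(_ (fun psi => t2 _ _)) H psi.
suff : a psi * a psi + b psi * b psi = 2 * (a psi * b psi) by rewrite /a /b; nia.
apply: H; rewrite big_split /= -big_distrr /= -cE -c1 -c2; lia.
Qed.


Lemma clone_ya E x y a : a != x -> a != y -> [set a; y] \in clone E x y -> [set a; x] \in E.
Proof.
move=> ax ay; rewrite mem_clone !inE eqxx orbT /= andbF /=.
by rewrite imsetU1 imset_set1 tr_z // tr_y => /andP [].
Qed.

Ltac dis := (try by []);
  match goal with
  | h1 : (?a == ?u) = true, h2 : (?a == ?v) = true, d : is_true (?u != ?v) |- _ =>
      by move: d; rewrite -(eqP h1) h2
  end.

Ltac ss := apply/setP => a;
  repeat match goal with | x := _ : {set _} |- _ => subst x end;
  rewrite !inE;
  match goal with |- context [?a == ?u] => case au: (a == u) end;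
  match goal with |- context [?a == ?u] => case av: (a == u) end;
  match goal with |- context [?a == ?u] => case aw: (a == u) end => //=; dis.

Lemma subD1 E X e0 : ~~ (e0 \subset X) -> (E :\ e0) :&: sub X = E :&: sub X.
Proof.
move=> h; apply/setP => e; rewrite !in_setI in_setD1.
case eX: (e \in sub X); rewrite ?andbF ?andbT //.
case: (e =P e0) => // ee; move: eX h; rewrite ee inE => ->.
by [].
Qed.

Ltac crs := intros h1 h2 h3 h4; rewrite !inE in h1 h2 h3 h4; revert h1 h2 h3 h4;
  repeat (case: eqP => [?|?]; try subst); simpl; try done;
  try (by match goal with
    | h : is_true (?x != ?x) |- _ => by rewrite eqxx in h
    | h : ?x <> ?x |- _ => by case: h end).

Lemma main (hr : 0 < r) E u v w : extremal F E -> [set u; v] \notin E -> [set u; w] \notin E ->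
  [set v; w] \in E -> extremal F (E :\ [set v; w]).
Proof.
move=> [sE extr] nuv nuw evw.
have vw : v != w.
  by have := forallP sE [set v; w]; rewrite evw cards2 /=; case: (v != w).
have uv : u != v by apply/eqP => h; move: nuw; rewrite h evw.
have uw : u != w by apply/eqP => h; move: nuv; rewrite h setUC evw.
have wv : w != v by rewrite eq_sym.
have vu : v != u by rewrite eq_sym.
have wu : w != u by rewrite eq_sym.
set E' := E :\ [set v; w].
have sE' : simple_graph E'.
  apply/forallP => e; apply/implyP; rewrite !inE => /andP [_ eE].
  by have := forallP sE e; rewrite eE.
split => // E'' sE''; apply: leq_trans (extr _ sE'') _.
set H := ~: [set u; v; w].
set Hu := u |: H. set Hv := v |: H. set Hw := w |: H. set Hvw := v |: Hw.
have e1 : Hu :|: Hvw = setT by ss.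
have e2 : Hu :&: Hvw = H by ss.
have e3 : Hv :|: Hw = Hvw by ss.
have e4 : Hv :&: Hw = H by ss.
have e5 : ~: [set u; v] = Hw by ss.
have e6 : u |: Hw = Hu :|: Hw by ss.
have e8 : Hu :&: Hw = H by ss.
have e9 : ~: [set u; w] = Hv by ss.
have e10 : u |: Hv = Hu :|: Hv by ss.
have e11 : w |: Hv = Hvw by ss.
have e12 : Hu :&: Hv = H by ss.
have uH : u \notin H by rewrite /H !inE eqxx.
have vH : v \notin H by rewrite /H !inE eqxx orbT.
have wH : w \notin H by rewrite /H !inE eqxx !orbT.
have vHu : v \notin Hu by rewrite /Hu !inE (negbTE vu) eqxx orbT.
have wHu : w \notin Hu by rewrite /Hu !inE (negbTE wu) eqxx !orbT.
have wHv : w \notin Hv by rewrite /Hv !inE (negbTE wv) eqxx !orbT.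
have HHv : H \subset Hv by apply: subsetUr.
have HHw : H \subset Hw by apply: subsetUr.
have cr1 : E :&: sub (Hu :|: Hvw) \subset sub Hu :|: sub Hvw.
  apply: cross_ok => // a b; unfold Hu, Hvw, Hv, Hw, H; crs; by move=> *; rewrite setUC.
have vHw : v \notin Hw by rewrite /Hw !inE (negbTE vw) eqxx !orbT.
have cE : cnt_free F E = \sum_psi ext E Hu H psi * ext E Hvw H psi.
  rewrite conv // (cntX_fib _ _ H); apply: eq_bigr => psi _.
  by have := ext_glue psi cr1; rewrite e1 e2.
have cr2 : E' :&: sub (Hu :|: Hvw) \subset sub Hu :|: sub Hvw.
  by apply: subset_trans cr1; apply: setSI; apply: subD1set.
have cr3 : E' :&: sub (Hv :|: Hw) \subset sub Hv :|: sub Hw.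
  apply: cross_ok => // a b; unfold Hu, Hvw, Hv, Hw, H; crs;
  by move=> *; rewrite /E' !inE setUC eqxx.
have nvwX X : (v \notin X) || (w \notin X) -> ~~ ([set v; w] \subset X).
  by case/orP => h; rewrite subUset !sub1set ?(negbTE h) ?andbF.
have cE' : cnt_free F E' = \sum_psi ext E Hu H psi * (ext E Hv H psi * ext E Hw H psi).
  rewrite conv // (cntX_fib _ _ H); apply: eq_bigr => psi _.
  have := ext_glue psi cr2; rewrite e1 e2 => ->.
  have := ext_glue psi cr3; rewrite e3 e4 => ->.
  rewrite /E' (@ext_eqE (E :\ [set v; w]) E Hu) ?subD1 ?nvwX ?vHu //.
  rewrite (@ext_eqE (E :\ [set v; w]) E Hv) ?subD1 ?nvwX ?wHv ?orbT //.
  by rewrite (@ext_eqE (E :\ [set v; w]) E Hw) ?subD1 ?nvwX ?vHw.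
set E1 := clone E u v; set K := clone E1 u w.
have sK : simple_graph K by apply: clone_simple; apply: clone_simple.
have nE1 : [set v; u] \notin E1 by rewrite setUC clone_xy.
have crK1 : K :&: sub (Hu :|: Hvw) \subset sub Hu :|: sub Hvw.
  apply: cross_ok => // a b; unfold Hu, Hvw, Hv, Hw, H; crs;
  move=> *; first [by rewrite setUC; apply: clone_xy |
    by apply/negP => hK; move: (clone_ab vw uw hK); apply/negP].
have crK2 : K :&: sub (Hv :|: Hw) \subset sub Hv :|: sub Hw.
  apply: cross_ok => // a b; unfold Hu, Hvw, Hv, Hw, H; crs;
  by move=> *; rewrite setUC; apply/negP => hK; move: (clone_ya vu vw hK); apply/negP.
have AK psi : ext K Hu H psi = ext E Hu H psi.
  by apply: ext_eqE; rewrite /K clone_sub // /E1 clone_sub.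
have VK psi : ext K Hv H psi = ext E Hu H psi.
  rewrite (@ext_eqE K E1); last by rewrite /K clone_sub.
  by rewrite /Hv /E1 clone_twin.
have WK psi : ext K Hw H psi = ext E Hu H psi.
  rewrite /Hw /K clone_twin // (@ext_eqE E1 E) //.
  by rewrite /E1 clone_sub.
have cK : cnt_free F K = \sum_psi ext E Hu H psi * (ext E Hu H psi * ext E Hu H psi).
  rewrite conv // (cntX_fib _ _ H); apply: eq_bigr => psi _.
  have := ext_glue psi crK1; rewrite e1 e2 => ->.
  by have := ext_glue psi crK2; rewrite e3 e4 => ->; rewrite AK VK WK.
have cr4 : E :&: sub (Hu :|: Hw) \subset sub Hu :|: sub Hw.
  apply: cross_ok => // a b; unfold Hu, Hvw, Hv, Hw, H; crs;
  by move=> *; rewrite setUC.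
have cr5 : E :&: sub (Hu :|: Hv) \subset sub Hu :|: sub Hv.
  apply: cross_ok => // a b; unfold Hu, Hvw, Hv, Hw, H; crs;
  by move=> *; rewrite setUC.
have F4 psi : ext E Hvw H psi = ext E Hu H psi * ext E Hw H psi.
  have pl := pair_lemma hr (conj sE extr) uv nuv; rewrite e5 e6 in pl.
  rewrite (ext_trans _ _ _ HHw).
  under eq_bigr => phi _ do rewrite -pl.
  rewrite -ext_trans //; first by have := ext_glue psi cr4; rewrite e8.
have F5 psi : ext E Hvw H psi = ext E Hu H psi * ext E Hv H psi.
  have pl := pair_lemma hr (conj sE extr) uw nuw; rewrite e9 e10 in pl.
  rewrite -e11 (ext_trans _ _ _ HHv).
  under eq_bigr => phi _ do rewrite -pl.
  rewrite -ext_trans //; first by have := ext_glue psi cr5; rewrite e12.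
clearbody K E1 E'.
have h2 : 2 * cnt_free F E <= cnt_free F E' + cnt_free F K.
  rewrite cE cE' cK -big_split big_distrr /=; apply: leq_sum => psi _.
  exact: t3 (F5 psi) (F4 psi).
exact: fin_ar h2 (extr _ sK).
Qed.

End S.

Theorem lemma2p10 (r k n : nat) (F : pattern k r) (E : {set {set 'I_n}})
  (u v w : 'I_n) :
  2 <= r -> 3 <= k ->
  extremal F E -> ~ complete_multipartite E ->
  [set u; v] \notin E -> [set u; w] \notin E -> [set v; w] \in E ->
  extremal F (E :\ [set v; w]).
Proof.
move=> r2 k3 ext _ nuv nuw vw.
exact: (@main n k r F (ltnW k3) (ltnW r2) E u v w ext nuv nuw vw).
Qed.
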